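(* Let $V=\{1,\#_1,\#_2,0\}$, with constant expressive semantics. There are exactly 167 distinct intersective mixed consequence truth-relations on $V$. Among them: (i) 18 admit a G-conditional (hence also a G-negation, a G-disjunction and a G-conjunction), namely the 16 mixed consequence relations together with $\models_{\{1,\#_1\},\{1,\#_1\}}\cap\models_{\{1,\#_2\},\{1,\#_2\}}$ and $\models_{\{1,\#_1\},\{1,\#_2\}}\cap\models_{\{1,\#_2\},\{1,\#_1\}}$, each of the latter two having a unique G-conditional $\to$, given by: $1\to y=y$ and $0\to y=1$ and $x\to 1=1$ for all $x,y$, and, for the first, $\#_1\to\#_1=1$, $\#_1\to\#_2=\#_2$, $\#_1\to0=\#_2$, $\#_2\to\#_1=\#_1$, $\#_2\to\#_2=1$, $\#_2\to0=\#_1$; for the second, $\#_1\to\#_1=\#_1$, $\#_1\to\#_2=1$, $\#_1\to0=\#_1$, $\#_2\to\#_1=1$, $\#_2\to\#_2=\#_2$, $\#_2\to0=\#_2$. (ii) 28 admit a G-conjunction and a G-disjunction but no G-negation (nor G-conditional). (iii) 27 admit a G-conjunction but no G-disjunction, and 27 others admit a G-disjunction but no G-conjunction (none of these admits a G-negation or G-conditional). (iv) The remaining 67 admit none of G-disjunction, G-conjunction, G-negation, G-conditional.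
   Context: A set of designated values is $\mathcal{D}\subseteq V$ with $1\in\mathcal{D}$, $0\notin\mathcal{D}$. The mixed consequence truth-relation $\models_{\mathcal{D}_p,\mathcal{D}_c}$: $\gamma\models\delta$ iff ($\gamma\subseteq\mathcal{D}_p\Rightarrow\delta\cap\mathcal{D}_c\neq\emptyset$), $\gamma,\delta\subseteq V$; intersective mixed truth-relations are finite intersections of these, and ''distinct'' means distinct as subsets of $\mathcal{P}(V)\times\mathcal{P}(V)$. A semantics: valuations mapping atoms to $V$, connectives interpreted by fixed truth functions, extended compositionally, every assignment to finitely many distinct atoms realized; constant expressive: every value is the constant value of some formula. $\Gamma\vdash\Delta$ iff $v(\Gamma)\models v(\Delta)$ for all $v$; $\Gamma,A=\Gamma\cup\{A\}$. A relation admits a G-connective if some truth function makes a connective satisfy, for all $\Gamma,\Delta,A,B$: G-conjunction: $\Gamma,A\wedge B\vdash\Delta$ iff $\Gamma,A,B\vdash\Delta$; $\Gamma\vdash A\wedge B,\Delta$ iff ($\Gamma\vdash A,\Delta$ and $\Gamma\vdash B,\Delta$). G-disjunction: $\Gamma\vdash A\vee B,\Delta$ iff $\Gamma\vdash A,B,\Delta$; $\Gamma,A\vee B\vdash\Delta$ iff ($\Gamma,A\vdash\Delta$ and $\Gamma,B\vdash\Delta$). G-negation: $\Gamma,\neg A\vdash\Delta$ iff $\Gamma\vdash A,\Delta$; $\Gamma\vdash\neg A,\Delta$ iff $\Gamma,A\vdash\Delta$. G-conditional: $\Gamma\vdash A\to B,\Delta$ iff $\Gamma,A\vdash B,\Delta$;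 $\Gamma,A\to B\vdash\Delta$ iff ($\Gamma\vdash A,\Delta$ and $\Gamma,B\vdash\Delta$). *)

(* Defs.v *)
From HB Require Import structures.
From mathcomp Require Import all_boot.
From Stdlib Require Import ClassicalEpsilon.
Set Implicit Arguments. Unset Strict Implicit. Unset Printing Implicit Defensive.

Inductive V : Type := One | H1 | H2 | Zero.

Definition v2o (x : V) : 'I_4 :=
  match x with One => inord 0 | H1 => inord 1 | H2 => inord 2 | Zero => inord 3 end.
Definition o2v (i : 'I_4) : V :=
  match val i with 0 => One | 1 => H1 | 2 => H2 | _ => Zero end.
Lemma v2oK : cancel v2o o2v.
Proof. by case; rewrite /o2v /= inordK. Qed.
HB.instance Definition _ := Equality.copy V (can_type v2oK).
HB.instance Definition _ := Choice.copy V (can_type v2oK).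
HB.instance Definition _ := Countable.copy V (can_type v2oK).
HB.instance Definition _ := Finite.copy V (can_type v2oK).

Definition pb (P : Prop) : bool :=
  if excluded_middle_informative P then true else false.

Definition trel := {set ({set V} * {set V})}.

Definition desig : {set {set V}} := [set D : {set V} | (One \in D) && (Zero \notin D)].

Definition mc (Dp Dc : {set V}) : trel :=
  [set p : {set V} * {set V} | (p.1 \subset Dp) ==> (p.2 :&: Dc != set0)].

Definition mixed_rels : {set trel} :=
  [set mc p.1 p.2 | p in setX desig desig].

Definition icap (P : {set {set V} * {set V}}) : trel :=
  \bigcap_(p in P) mc p.1 p.2.
Definition intersective : {set trel} :=
  [set icap P | P in [set Q in powerset (setX desig desig) | Q != set0]].

Record semantics := Semantics {
  conn : Type;
  arity : conn -> nat;
  interp : forall c : conn, ('I_(arity c) -> V) -> V }.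

Inductive formula (C : Type) (ar : C -> nat) : Type :=
| Atom of nat
| App (c : C) of ('I_(ar c) -> formula ar).
Arguments Atom {C ar}.
Arguments App {C ar}.

Fixpoint eval (C : Type) (ar : C -> nat) (I : forall c, ('I_(ar c) -> V) -> V)
    (v : nat -> V) (A : formula ar) : V :=
  match A with
  | Atom n => v n
  | App c args => I c (fun i => eval I v (args i))
  end.

Definition const_expressive (S : semantics) : Prop :=
  forall x : V, exists A : formula (@arity S), forall v : nat -> V,
    eval (@interp S) v A = x.

(* extension of S by one new connective (None) of arity k *)
Definition ext_ar (S : semantics) (k : nat) (o : option (conn S)) : nat :=
  match o with None => k | Some c => arity c end.

Definition ext_interp (S : semantics) (k : nat) (f : ('I_k -> V) -> V)
  (o : option (conn S)) : ('I_(@ext_ar S k o) -> V) -> V :=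
  match o as o0 return ('I_(@ext_ar S k o0) -> V) -> V with
  | None => f
  | Some c => @interp S c
  end.

Definition eform (S : semantics) (k : nat) := formula (@ext_ar S k).

Definition eeval (S : semantics) (k : nat) (f : ('I_k -> V) -> V)
  (v : nat -> V) (A : eform S k) : V := eval (ext_interp f) v A.

Definition img (S : semantics) (k : nat) (f : ('I_k -> V) -> V)
  (v : nat -> V) (G : eform S k -> Prop) : {set V} :=
  [set x : V | pb (exists A, G A /\ eeval f v A = x)].

Definition derives (S : semantics) (k : nat) (f : ('I_k -> V) -> V) (R : trel)
  (G D : eform S k -> Prop) : Prop :=
  forall v : nat -> V, (img f v G, img f v D) \in R.

Definition addf (T : Type) (G : T -> Prop) (A : T) : T -> Prop :=
  fun B => G B \/ B = A.

Definition un (S : semantics) (A : eform S 1) : eform S 1 :=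
  @App _ (@ext_ar S 1) None (fun _ : 'I_1 => A).
Definition bin (S : semantics) (A B : eform S 2) : eform S 2 :=
  @App _ (@ext_ar S 2) None (fun i : 'I_2 => if val i == 0 then A else B).

Definition tf1 (g : V -> V) : ('I_1 -> V) -> V := fun a => g (a ord0).
Definition tf2 (g : V -> V -> V) : ('I_2 -> V) -> V :=
  fun a => g (a ord0) (a ord_max).

Definition Gconj_fun (S : semantics) (R : trel) (g : V -> V -> V) : Prop :=
  let d := derives (tf2 g) R in
  forall (G D : eform S 2 -> Prop) (A B : eform S 2),
    (d (addf G (bin A B)) D <-> d (addf (addf G A) B) D) /\
    (d G (addf D (bin A B)) <-> d G (addf D A) /\ d G (addf D B)).

Definition Gdisj_fun (S : semantics) (R : trel) (g : V -> V -> V) : Prop :=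
  let d := derives (tf2 g) R in
  forall (G D : eform S 2 -> Prop) (A B : eform S 2),
    (d G (addf D (bin A B)) <-> d G (addf (addf D A) B)) /\
    (d (addf G (bin A B)) D <-> d (addf G A) D /\ d (addf G B) D).

Definition Gneg_fun (S : semantics) (R : trel) (g : V -> V) : Prop :=
  let d := derives (tf1 g) R in
  forall (G D : eform S 1 -> Prop) (A : eform S 1),
    (d (addf G (un A)) D <-> d G (addf D A)) /\
    (d G (addf D (un A)) <-> d (addf G A) D).

Definition Gcond_fun (S : semantics) (R : trel) (g : V -> V -> V) : Prop :=
  let d := derives (tf2 g) R in
  forall (G D : eform S 2 -> Prop) (A B : eform S 2),
    (d G (addf D (bin A B)) <-> d (addf G A) (addf D B)) /\
    (d (addf G (bin A B)) D <-> d G (addf D A) /\ d (addf G B) D).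

Definition admits_conj (S : semantics) (R : trel) := exists g, Gconj_fun S R g.
Definition admits_disj (S : semantics) (R : trel) := exists g, Gdisj_fun S R g.
Definition admits_neg (S : semantics) (R : trel) := exists g, Gneg_fun S R g.
Definition admits_cond (S : semantics) (R : trel) := exists g, Gcond_fun S R g.

Definition R11_22 : trel :=
  mc [set One; H1] [set One; H1] :&: mc [set One; H2] [set One; H2].
Definition R12_21 : trel :=
  mc [set One; H1] [set One; H2] :&: mc [set One; H2] [set One; H1].

Definition cond_a (x y : V) : V :=
  match x, y with
  | One, _ => y
  | Zero, _ => One
  | _, One => One
  | H1, H1 => One | H1, H2 => H2 | H1, Zero => H2
  | H2, H1 => H1 | H2, H2 => One | H2, Zero => H1
  end.
Definition cond_b (x y : V) : V :=
  match x, y with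
  | One, _ => y
  | Zero, _ => One
  | _, One => One
  | H1, H1 => H1 | H1, H2 => One | H1, Zero => H1
  | H2, H1 => One | H2, H2 => H2 | H2, Zero => H2
  end.

(* Main.v *)
Require Import Defs.
From HB Require Import structures.
From mathcomp Require Import all_boot.
From Stdlib Require Import ClassicalEpsilon FunctionalExtensionality.
Set Implicit Arguments. Unset Strict Implicit. Unset Printing Implicit Defensive.

Definition Q4 := (bool * bool * bool * bool)%type.
Definition K := ((bool * bool) * (bool * bool))%type.
Definition allV : seq V := [:: One; H1; H2; Zero].
Definition allQ4 : seq Q4 := [:: (true, true, true, true); (true, true, true, false); (true, true, false, true); (true, true, false, false); (true, false, true, true); (true, false, true, false); (true, false, false, true); (true, false, false, false); (false, true, true, true); (false, true, true, false); (false, true, false, true); (false, true, false, false); (false, false, true, true); (false, false, true, false); (false, false, false, true); (false, false, false, false)].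
Definition allK : seq K := [:: ((true, true), (true, true)); ((true, true), (true, false)); ((true, true), (false, true)); ((true, true), (false, false)); ((true, false), (true, true)); ((true, false), (true, false)); ((true, false), (false, true)); ((true, false), (false, false)); ((false, true), (true, true)); ((false, true), (true, false)); ((false, true), (false, true)); ((false, true), (false, false)); ((false, false), (true, true)); ((false, false), (true, false)); ((false, false), (false, true)); ((false, false), (false, false))].
Definition add4 (q : Q4) (x : V) : Q4 :=
  match x with
  | One => (true, q.1.1.2, q.1.2, q.2)
  | H1 => (q.1.1.1, true, q.1.2, q.2)
  | H2 => (q.1.1.1, q.1.1.2, true, q.2)
  | Zero => (q.1.1.1, q.1.1.2, q.1.2, true) end.
Definition sub4 (p q : Q4) : bool :=
  [&& p.1.1.1 ==> q.1.1.1, p.1.1.2 ==> q.1.1.2, p.1.2 ==> q.1.2 & p.2 ==> q.2].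
Definition meet4 (p q : Q4) : bool :=
  [|| p.1.1.1 && q.1.1.1, p.1.1.2 && q.1.1.2, p.1.2 && q.1.2 | p.2 && q.2].
Definition dp4 (k : K) : Q4 := (true, k.1.1, k.1.2, false).
Definition dc4 (k : K) : Q4 := (true, k.2.1, k.2.2, false).
Definition nc4 (k : K) : Q4 := (false, ~~ k.2.1, ~~ k.2.2, true).
Definition le (k j : K) : bool := sub4 (dp4 k) (dp4 j) && sub4 (dc4 j) (dc4 k).
Definition memf (P : seq K) (q t : Q4) : bool :=
  all (fun k => sub4 q (dp4 k) ==> meet4 t (dc4 k)) P.
Definition dclist (J : seq K) := [seq k <- allK | has (le k) J].
Definition unionc (A B : seq K) := [seq k <- allK | (k \in A) || (k \in B)].
Fixpoint gen (J : seq K) : seq (seq K) :=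
  match J with [::] => [:: [::]]
  | j :: J0 => let r := gen J0 in undup (r ++ map (unionc (dclist [:: j])) r) end.
Definition Lc := filter (fun P => P != [::]) (gen allK).
Fact Lkey : unit. Proof. exact: tt. Qed.
Definition L := locked_with Lkey Lc.
Lemma LE : L = Lc. Proof. exact: unlock. Qed.

Inductive bt (A : Type) := Lf of A | Nd of bt A & bt A.
Arguments Lf {A}. Arguments Nd {A}.
Definition mkb {A} (f : bool -> bt A) := Nd (f true) (f false).
Definition mk4 {A} (f : Q4 -> A) : bt A :=
  mkb (fun o => mkb (fun a => mkb (fun b => mkb (fun z => Lf (f (o, a, b, z)))))).
Definition lkb {A} (t : bt A) (x : bool) : bt A :=
  match t with Nd l r => if x then l else r | _ => t end.
Definition lk4 {A} (d : A) (t : bt A) (q : Q4) : A :=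
  match lkb (lkb (lkb (lkb t q.1.1.1) q.1.1.2) q.1.2) q.2 with Lf x => x | _ => d end.
Definition tab (r : Q4 -> Q4 -> bool) := mk4 (fun g => mk4 (r g)).
Definition lk2 (t : bt (bt bool)) g d := lk4 false (lk4 (Lf false) t g) d.

Definition beq (x y : bool) := if x then y else ~~ y.
Definition addl (q : Q4) (ws : seq V) := foldl add4 q ws.
Definition Rf (r : Q4 -> Q4 -> bool) g d := fun ws vs => r (addl g ws) (addl d vs).
Definition forQ (p : Q4 -> Q4 -> bool) := all (fun g => all (fun d => p g d) allQ4) allQ4.
Definition allR : seq Q4 :=
  [:: (false, true, true, false); (false, true, false, false);
      (false, false, true, false); (false, false, false, false)].
Definition forQr (p : Q4 -> Q4 -> bool) := all (fun g => all (fun d => p g d) allR) allR.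
Definition bC (a b z : V) (R : seq V -> seq V -> bool) :=
  beq (R [:: z] [::]) (R [:: a; b] [::]) && beq (R [::] [:: z]) (R [::] [:: a] && R [::] [:: b]).
Definition bD (a b z : V) (R : seq V -> seq V -> bool) :=
  beq (R [::] [:: z]) (R [::] [:: a; b]) && beq (R [:: z] [::]) (R [:: a] [::] && R [:: b] [::]).
Definition bCo (a b z : V) (R : seq V -> seq V -> bool) :=
  beq (R [::] [:: z]) (R [:: a] [:: b]) && beq (R [:: z] [::]) (R [::] [:: a] && R [:: b] [::]).
Definition bN (a z : V) (R : seq V -> seq V -> bool) :=
  beq (R [:: z] [::]) (R [::] [:: a]) && beq (R [::] [:: z]) (R [:: a] [::]).
Definition f2 (Q : V -> V -> V -> bool) :=
  all (fun a => all (fun b => has (fun z => Q a b z) allV) allV) allV.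
Definition f1 (Q : V -> V -> bool) := all (fun a => has (fun z => Q a z) allV) allV.
Definition P2 (fq : (Q4 -> Q4 -> bool) -> bool) (B : V -> V -> V -> (seq V -> seq V -> bool) -> bool)
  (r : Q4 -> Q4 -> bool) := f2 (fun a b z => fq (fun g d => B a b z (Rf r g d))).
Definition P1 (fq : (Q4 -> Q4 -> bool) -> bool) (B : V -> V -> (seq V -> seq V -> bool) -> bool)
  (r : Q4 -> Q4 -> bool) := f1 (fun a z => fq (fun g d => B a z (Rf r g d))).
Definition sigr (r : Q4 -> Q4 -> bool) :=
  (P2 forQr bC r, P2 forQr bD r, P1 forQr bN r, P2 forQr bCo r).
Definition sigt (t : bt (bt bool)) := sigr (lk2 t).
Definition fsig (P : seq K) := sigt (tab (memf P)).
Definition SIG : seq (bool * bool * bool * bool) := [:: (true, true, true, true); (true, true, true, true); (true, true, true, true); (true, false, false, false); (true, true, true, true); (true, true, true, true); (true, true, false, false); (false, false, false, false); (false, false, false, false); (true, true, false, false); (true, true, true, true); (true, false, false, false); (true, true, false, false); (true, true, true, true); (true, false, false, false); (true, false, false, false); (true, true, false, false); (true, false, false, false); (true, true, true, true); (true, true, true, true); (false, false, false, false); (true, true, false, false); (false, false, false, false); (true, true, false, false); (false, true, false, false); (false, false, false, false); (false, false, false, false); (false, false, false, false); (false, false, false, false); (false, true, false, false); (false, false, false, false); (false, false, false, false); (false, true, false, false); (false, false, false, false); (false, false, false, false); (false, true, false, false); (false, false, false, false); (false, false, false, false); (true, true, true, true); (true, false, false, false); (true, false, false, false); (false, true, false,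 false); (false, false, false, false); (false, false, false, false); (true, true, false, false); (true, false, false, false); (true, false, false, false); (true, true, true, true); (true, false, false, false); (true, true, false, false); (true, false, false, false); (true, false, false, false); (true, true, true, true); (true, false, false, false); (true, true, false, false); (false, true, false, false); (false, false, false, false); (false, false, false, false); (true, true, true, true); (true, false, false, false); (true, true, false, false); (true, false, false, false); (true, false, false, false); (true, true, false, false); (true, false, false, false); (true, false, false, false); (true, true, false, false); (true, false, false, false); (false, true, false, false); (false, false, false, false); (true, true, false, false); (true, false, false, false); (true, true, false, false); (true, false, false, false); (true, true, false, false); (true, false, false, false); (true, false, false, false); (true, true, true, true); (false, false, false, false); (true, false, false, false); (true, false, false, false); (true, false, false, false); (true, false, false, false); (true, true, true, true); (true, true, false, false); (true, true, false, false); (false, false, false, false); (true, true, false, false); (true, true, false, false); (false, false, false, false); (true, true, false, false); (false, true, false, false); (false, false, false, false); (false, false, false, false); (false, true, false, false); (false, false, false, false); (true, true, false, false); (false, true, false, false); (false, false, false, false); (false, false, false, false); (false, true, false, false); (false, false, false, false); (false, false, false, false); (false, true, false, false); (false, false, false, false); (false, true, false, false); (false, false, false, false); (false, false, false, false); (true, true, false, false); (false, false, false, false); (true, true, false, false); (false, true, false, false); (false, false, false, false); (false, true, false, false); (false, false, false, false); (false, false, false, false); (false, true, false, false); (false, false, false, false); (false, false, false, false); (false, true, false, false); (false, false, false, false); (false, true, false, false); (false, false, false, false); (false, true, false, false); (false, false, false, false); (false, true, false, false); (false, false, false, false); (false, false, false, false); (true, true, false, false); (false, false, false, false); (false, false,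 false, false); (false, false, false, false); (false, false, false, false); (true, true, true, true); (false, false, false, false); (true, true, false, false); (false, true, false, false); (false, false, false, false); (true, true, false, false); (false, true, false, false); (false, false, false, false); (false, true, false, false); (false, false, false, false); (false, false, false, false); (false, false, false, false); (false, false, false, false); (false, false, false, false); (true, true, true, true); (false, false, false, false); (true, true, false, false); (false, true, false, false); (false, false, false, false); (false, false, false, false); (false, true, false, false); (false, false, false, false); (false, true, false, false); (false, false, false, false); (false, false, false, false); (true, true, false, false); (false, false, false, false); (false, false, false, false); (false, true, false, false); (false, false, false, false); (false, false, false, false); (false, false, false, false); (false, false, false, false); (true, true, true, true)].

Lemma sigL : map fsig Lc = SIG.
Proof. vm_cast_no_check (erefl SIG). Qed.

Definition dec (q : Q4) : {set V} :=
  [set x | match x with One => q.1.1.1 | H1 => q.1.1.2 | H2 => q.1.2 | Zero => q.2 end].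
Definition enc (A : {set V}) : Q4 := (One \in A, H1 \in A, H2 \in A, Zero \in A).

Lemma eqVE (x y : V) : (x == y) = match x, y with
  | One, One | H1, H1 | H2, H2 | Zero, Zero => true | _, _ => false end.
Proof. by case: x; case: y; rewrite ?eqxx //; apply/negbTE/eqP. Qed.

Lemma veqP (x y : V) : reflect (x = y) (match x, y with
  | One, One | H1, H1 | H2, H2 | Zero, Zero => true | _, _ => false end).
Proof. by case: x; case: y; constructor. Qed.

Lemma decK q : enc (dec q) = q.
Proof. by case: q => [[[o a] b] z]; rewrite /enc !inE. Qed.

Lemma encK A : dec (enc A) = A.
Proof. by apply/setP => x; rewrite inE; case: x. Qed.

Lemma subE (A B : {set V}) : (A \subset B) = sub4 (enc A) (enc B).
Proof.
apply/subsetP/and4P => [H|[h1 h2 h3 h4]]; first by split; apply/implyP => /H.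
by case => hx; [apply: (implyP h1) | apply: (implyP h2) | apply: (implyP h3) | apply: (implyP h4)].
Qed.

Lemma meetE (A B : {set V}) : (A :&: B != set0) = meet4 (enc A) (enc B).
Proof.
apply/set0Pn/idP => [[x]|].
  by rewrite inE => /andP [hA hB]; case: x hA hB => hA hB; rewrite /meet4 /= hA hB ?orbT.
rewrite /meet4 /= => /or4P [] /andP [hA hB];
  [exists One | exists H1 | exists H2 | exists Zero]; by rewrite inE hA hB.
Qed.

Lemma dec_add q x : dec (add4 q x) = dec q :|: [set x].
Proof.
by apply/setP => y; rewrite !inE eqVE; case: x; case: y; rewrite /= ?orbT ?orbF.
Qed.

Definition addS (A : {set V}) (ws : seq V) := foldl (fun B x => B :|: [set x]) A ws.

Lemma dec_addl q ws : dec (addl q ws) = addS (dec q) ws.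
Proof. by elim: ws q => //= x ws IH q; rewrite IH dec_add. Qed.

Lemma mem_allV x : x \in allV. Proof. by rewrite !inE !eqVE; case: x. Qed.
Lemma mem_allK (k : K) : k \in allK. Proof. by case: k => [[[] []] [[] []]]. Qed.
Lemma mem_allQ4 (q : Q4) : q \in allQ4. Proof. by case: q => [[[[] []] []] []]. Qed.

Lemma forall_set4 (p : pred {set V}) : [forall G, p G] = all (fun q => p (dec q)) allQ4.
Proof.
apply/forallP/allP => [H q _|H G]; first exact: H.
by rewrite -(encK G); apply: H; exact: mem_allQ4.
Qed.

Lemma forallVE (p : pred V) : [forall x, p x] = all p allV.
Proof. by apply/forallP/allP => [H x _|H x]; [exact: H | apply: H; exact: mem_allV]. Qed.

Lemma beqP x y : reflect (x = y) (beq x y).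
Proof. by case: x; case: y; constructor. Qed.

Lemma beq_refl x : beq x x. Proof. by case: x. Qed.

Lemma lk4_mk4 A (d : A) (f : Q4 -> A) q : lk4 d (mk4 f) q = f q.
Proof. by case: q => [[[[] []] []] []]. Qed.

Lemma lk2_tab r : lk2 (tab r) = r.
Proof.
apply: functional_extensionality => g; apply: functional_extensionality => d.
by rewrite /lk2 /tab lk4_mk4 lk4_mk4.
Qed.

Definition norm (g : Q4) : Q4 := (false, g.1.1.2, g.1.2, g.2).
Definition normd (d : Q4) : Q4 := (d.1.1.1, d.1.1.2, d.1.2, false).

Lemma norm_addl g ws : norm (addl g ws) = norm (addl (norm g) ws).
Proof.
elim: ws g => [|x ws IH] g //=.
rewrite IH [RHS]IH; congr (norm (addl _ ws)); by case: x.
Qed.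

Lemma normd_addl g ws : normd (addl g ws) = normd (addl (normd g) ws).
Proof.
elim: ws g => [|x ws IH] g //=.
rewrite IH [RHS]IH; congr (normd (addl _ ws)); by case: x.
Qed.

Lemma addl2 (g : Q4) ws : g.2 -> (addl g ws).2.
Proof. by elim: ws g => //= x ws IH g h; apply: IH; case: x. Qed.
Lemma addl1 (g : Q4) ws : g.1.1.1 -> (addl g ws).1.1.1.
Proof. by elim: ws g => //= x ws IH g h; apply: IH; case: x. Qed.

Lemma forQ_restr (r : Q4 -> Q4 -> bool) (B : (seq V -> seq V -> bool) -> bool) :
  (forall g d : Q4, g.2 || d.1.1.1 -> r g d) ->
  (forall g d, r g d = r (norm g) (normd d)) ->
  B (fun _ _ => true) ->
  forQr (fun g d => B (Rf r g d)) = forQ (fun g d => B (Rf r g d)).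
Proof.
move=> Hr1 Hr2 HB; apply/idP/idP => H; last first.
  apply/allP => g _; apply/allP => d _.
  by move/allP: H => /(_ g (mem_allQ4 g)) /allP /(_ d (mem_allQ4 d)).
apply/allP => g _; apply/allP => d _.
case h: (g.2 || d.1.1.1).
  have -> : Rf r g d = fun _ _ => true; last exact: HB.
  apply: functional_extensionality => ws; apply: functional_extensionality => vs.
  apply: Hr1; case/orP: h => h; [by rewrite addl2 | by rewrite addl1 ?orbT].
have -> : Rf r g d = Rf r (norm g) (normd d).
  apply: functional_extensionality => ws; apply: functional_extensionality => vs.
  by rewrite /Rf Hr2 [RHS]Hr2 -norm_addl -normd_addl.
case/norP: h => h1 h2.
have Hg : norm g \in allR by case: g h1 => [[[o a] b] c] /= /negbTE ->; case: a; case: b.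
have Hd : normd d \in allR by case: d h2 => [[[o a] b] c] /= /negbTE ->; case: a; case: b.
by move/allP: H => /(_ _ Hg) /allP /(_ _ Hd).
Qed.

Lemma memf_triv P (g d : Q4) : g.2 || d.1.1.1 -> memf P g d.
Proof.
move=> h; apply/allP => k _; rewrite /sub4 /meet4 /dp4 /dc4 /=.
by case/orP: h => ->; rewrite ?andbF ?implybT.
Qed.

Lemma memf_norm P g d : memf P g d = memf P (norm g) (normd d).
Proof. by apply: eq_all => k; rewrite /sub4 /meet4 /dp4 /dc4 /= !implybT !andbF. Qed.

Lemma P2_restr (B : V -> V -> V -> (seq V -> seq V -> bool) -> bool) (r : Q4 -> Q4 -> bool) : (forall a b z, B a b z (fun _ _ => true)) ->
  (forall g d : Q4, g.2 || d.1.1.1 -> r g d) ->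
  (forall g d, r g d = r (norm g) (normd d)) ->
  P2 forQr B r = P2 forQ B r.
Proof.
move=> HB H1 H2; rewrite /P2 /f2; apply: eq_all => a; apply: eq_all => b.
by apply: eq_has => z; apply: forQ_restr.
Qed.

Lemma P1_restr (B : V -> V -> (seq V -> seq V -> bool) -> bool) (r : Q4 -> Q4 -> bool) : (forall a z, B a z (fun _ _ => true)) ->
  (forall g d : Q4, g.2 || d.1.1.1 -> r g d) ->
  (forall g d, r g d = r (norm g) (normd d)) ->
  P1 forQr B r = P1 forQ B r.
Proof.
move=> HB H1 H2; rewrite /P1 /f1; apply: eq_all => a.
by apply: eq_has => z; apply: forQ_restr.
Qed.

Lemma fsigE P : fsig P =
  (P2 forQ bC (memf P), P2 forQ bD (memf P), P1 forQ bN (memf P), P2 forQ bCo (memf P)).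
Proof.
rewrite /fsig /sigt lk2_tab /sigr.
by rewrite !P2_restr ?P1_restr //; (apply: memf_triv || apply: memf_norm).
Qed.

Definition e (k : K) : {set V} * {set V} := (dec (dp4 k), dec (dc4 k)).
Definition relM (P : seq K) : trel := icap (e @: [set k in P]).

Lemma sub4E p q : sub4 p q = (dec p \subset dec q).
Proof. by rewrite subE !decK. Qed.

Lemma le_refl k : le k k.
Proof. by rewrite /le /sub4 !implybb. Qed.

Lemma mcE (x : {set V} * {set V}) A B :
  (x \in mc A B) = sub4 (enc x.1) (enc A) ==> meet4 (enc x.2) (enc B).
Proof. by rewrite /mc inE subE meetE. Qed.

Lemma mono k j x : le k j -> x \in mc (e j).1 (e j).2 -> x \in mc (e k).1 (e k).2.
Proof.
rewrite /le !sub4E => /andP [s1 s2]; rewrite /mc !inE /= => /implyP h.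
apply/implyP => hx; have := h (subset_trans hx s1).
move=> /set0Pn [y]; rewrite inE => /andP [y1 y2].
by apply/set0Pn; exists y; rewrite inE y1 (subsetP s2 _ y2).
Qed.

Lemma eX k : e k \in setX desig desig.
Proof. by rewrite in_setX !inE /=. Qed.

Lemma Xe p : p \in setX desig desig -> exists k, p = e k.
Proof.
case: p => A B; rewrite in_setX !inE /= => /andP [/andP [hA1 hA0] /andP [hB1 hB0]].
exists ((H1 \in A, H2 \in A), (H1 \in B, H2 \in B)).
rewrite /e /dp4 /dc4 /=; congr pair; apply/setP => x; rewrite inE; case: x => //=.
all: try by rewrite ?hA1 ?hB1 ?(negbTE hA0) ?(negbTE hB0).
Qed.

Lemma memrel P x : (x \in relM P) = all (fun k => x \in mc (e k).1 (e k).2) P.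
Proof.
rewrite /relM /icap; apply/bigcapP/allP => [H k kP|H p /imsetP [k kP ->]].
  by apply: (H (e k)); apply/imsetP; exists k => //; rewrite inE.
by apply: H; rewrite inE in kP.
Qed.

Lemma memrelE P q t : ((dec q, dec t) \in relM P) = memf P q t.
Proof. by rewrite memrel; apply: eq_all => k; rewrite mcE /= !decK. Qed.

Lemma memrel_dcl J x : (x \in relM (dclist J)) = all (fun j => x \in mc (e j).1 (e j).2) J.
Proof.
rewrite memrel; apply/allP/allP => H j jJ.
  by apply: H; rewrite mem_filter mem_allK andbT; apply/hasP; exists j => //; exact: le_refl.
move: jJ; rewrite mem_filter => /andP [/hasP [j' j'J lejj'] _].
exact: mono lejj' (H j' j'J).
Qed.

Lemma relM_dcl1 k : relM (dclist [:: k]) = mc (e k).1 (e k).2.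
Proof. by apply/setP => x; rewrite memrel_dcl /= andbT. Qed.

Lemma gen_complete (p : pred K) J :
  [seq k <- allK | has (fun j => p j && le k j) J] \in gen J.
Proof.
elim: J => [|j J IH].
  by rewrite (@eq_filter _ _ pred0) // filter_pred0.
change (gen (j :: J)) with (undup (gen J ++ map (unionc (dclist [:: j])) (gen J))).
rewrite mem_undup mem_cat; case pj: (p j).
  apply/orP; right; apply/mapP.
  exists [seq k <- allK | has (fun j => p j && le k j) J] => //.
  rewrite /unionc; apply: eq_filter => k.
  rewrite /dclist !mem_filter mem_allK !andbT.
  by rewrite [has _ (j :: J)]/= [has _ [:: j]]/= pj orbF.
apply/orP; left.
rewrite (@eq_filter _ _ (fun k => has (fun j => p j && le k j) J)) // => k.
by rewrite [has _ (j :: J)]/= pj.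
Qed.

Lemma inter_eq : intersective = [set R in map relM L].
Proof.
apply/setP => R; rewrite [in RHS]inE; apply/imsetP/mapP => [[Q HQ ->]|[P PL ->]].
  move: HQ; rewrite inE powersetE => /andP [QX Qn0].
  exists [seq k <- allK | has (fun j => (e j \in Q) && le k j) allK].
    rewrite LE /Lc mem_filter gen_complete andbT.
    case/set0Pn: Qn0 => p pQ; have [j pe] := Xe (subsetP QX _ pQ).
    apply/eqP => P0.
    have : j \in [seq k <- allK | has (fun j => (e j \in Q) && le k j) allK].
      rewrite mem_filter mem_allK andbT; apply/hasP; exists j; first exact: mem_allK.
      by rewrite -pe pQ le_refl.
    by rewrite P0.
  apply/setP => x; rewrite memrel /icap; apply/bigcapP/allP => [H k|H p pQ].
    rewrite mem_filter => /andP [/hasP [j _ /andP [ejQ lekj]] _].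
    exact: mono lekj (H _ ejQ).
  have [j pe] := Xe (subsetP QX _ pQ); rewrite pe; apply: H.
  rewrite mem_filter mem_allK andbT; apply/hasP; exists j; first exact: mem_allK.
  by rewrite -pe pQ le_refl.
exists (e @: [set k in P]) => //.
rewrite inE powersetE; apply/andP; split.
  by apply/subsetP => p /imsetP [k _ ->]; exact: eX.
move: PL; rewrite LE mem_filter => /andP [Pn0 _].
case: P Pn0 => [//|k P'] _.
by apply/set0Pn; exists (e k); apply/imsetP; exists k => //; rewrite inE mem_head.
Qed.

Definition testP (P : seq K) := [seq k <- allK | ~~ memf P (dp4 k) (nc4 k)].

Lemma Hfix : all (fun P => testP P == P) L.
Proof. by rewrite LE; vm_compute. Qed.

Lemma uniqL : uniq L.
Proof. by rewrite LE; vm_compute. Qed.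

Lemma sizeL : size L = 167.
Proof. by rewrite LE; vm_compute. Qed.

Lemma relM_inj : {in L &, injective relM}.
Proof.
move=> P P' hP hP' E; move/allP: Hfix => H.
rewrite -(eqP (H P hP)) -(eqP (H P' hP')); apply: eq_filter => k.
by rewrite -!memrelE E.
Qed.

Lemma setfilt (pr : trel -> bool) (fp : seq K -> bool) :
  (forall P, P \in L -> pr (relM P) = fp P) ->
  [set R in intersective | pr R] = [set R in map relM (filter fp L)].
Proof.
move=> H; apply/setP => R; rewrite !inE inter_eq inE.
apply/andP/mapP => [[/mapP [P PL ->] hp]|[P]].
  by exists P => //; rewrite mem_filter -(H P PL) hp PL.
by rewrite mem_filter => /andP [fP PL] ->; split; [apply/mapP; exists P | rewrite H].
Qed.

Lemma card_relM s : {subset s <= L} -> uniq s -> #|[set R in map relM s]| = size s.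
Proof.
move=> sL us; have U : uniq (map relM s).
  by rewrite (map_inj_in_uniq (fun x y hx hy => relM_inj (sL x hx) (sL y hy))).
by rewrite cardsE; move/card_uniqP: U => ->; rewrite size_map.
Qed.

Lemma card_filt (pr : trel -> bool) (fp : seq K -> bool) :
  (forall P, P \in L -> pr (relM P) = fp P) ->
  #|[set R in intersective | pr R]| = count fp L.
Proof.
move=> H; rewrite (setfilt H) card_relM ?size_filter ?filter_uniq ?uniqL //.
by move=> P; rewrite mem_filter => /andP [].
Qed.

Lemma card_inter : #|intersective| = 167.
Proof.
by rewrite inter_eq card_relM ?uniqL ?sizeL.
Qed.

Lemma countS (p : bool * bool * bool * bool -> bool) :
  count (fun P => p (fsig P)) L = count p SIG.
Proof. by rewrite LE -sigL count_map. Qed.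

Lemma allzip (A B : Type) (h : A -> B -> bool) (f : A -> B) s :
  all (fun x => h x (f x)) s = all (fun x => h x.1 x.2) (zip s (map f s)).
Proof. by elim: s => //= x s ->. Qed.

Lemma allS (h : seq K -> bool * bool * bool * bool -> bool) :
  all (fun P => h P (fsig P)) L = all (fun x => h x.1 x.2) (zip Lc SIG).
Proof. by rewrite allzip LE sigL. Qed.

Fixpoint emb (S : semantics) (k : nat) (A : formula (@arity S)) {struct A} : eform S k :=
  match A with
  | Atom n => Atom n
  | App c args => @App _ (@ext_ar S k) (Some c) (fun i => emb k (args i))
  end.

Lemma eeval_emb (S : semantics) k (f : ('I_k -> V) -> V) v (A : formula (@arity S)) :
  eeval f v (emb k A) = eval (@interp S) v A.
Proof.
elim: A => [n|c args IH] //=.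
rewrite /eeval /=; congr (@interp S c _); apply: functional_extensionality => i.
exact: IH.
Qed.

Lemma const_ex (S : semantics) (HS : const_expressive S) k (f : ('I_k -> V) -> V) x :
  exists A : eform S k, forall v, eeval f v A = x.
Proof. by have [A HA] := HS x; exists (emb k A) => v; rewrite eeval_emb. Qed.

Lemma pbP (P : Prop) : reflect P (pb P).
Proof. by rewrite /pb; case: excluded_middle_informative => h; constructor. Qed.

Lemma pb_iff (P Q : Prop) : (P <-> Q) -> pb P = pb Q.
Proof. by move=> h; apply/pbP/pbP => /h. Qed.

Lemma pb_and (P Q : Prop) : pb (P /\ Q) = pb P && pb Q.
Proof.
apply/pbP/andP => [[/pbP h1 /pbP h2]|[/pbP h1 /pbP h2]]; by split.
Qed.

Definition constset (S : semantics) k (f : ('I_k -> V) -> V) (G : {set V}) : eform S k -> Prop :=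
  fun A => exists2 x, x \in G & forall v, eeval f v A = x.

Lemma img_const (S : semantics) (HS : const_expressive S) k (f : ('I_k -> V) -> V) v G :
  img f v (@constset S k f G) = G.
Proof.
apply/setP => x; rewrite inE; apply/pbP/idP => [[A [[y yG hA] <-]]|xG].
  by rewrite hA.
have [A hA] := const_ex HS f x.
by exists A; split; [exists x | apply: hA].
Qed.

Lemma img_addf (S : semantics) k (f : ('I_k -> V) -> V) v (G : eform S k -> Prop) A :
  img f v (addf G A) = img f v G :|: [set eeval f v A].
Proof.
apply/setP => x; rewrite !inE.
apply/pbP/orP => [[B [[GB|->] <-]]|[/pbP [B [GB <-]]|/eqP ->]].
- by left; apply/pbP; exists B.
- by right.
- by exists B; split => //; left.
- by exists A; split => //; right.
Qed.

Lemma eeval_bin (S : semantics) (g : V -> V -> V) v (A B : eform S 2) :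
  eeval (tf2 g) v (bin A B) = g (eeval (tf2 g) v A) (eeval (tf2 g) v B).
Proof. by []. Qed.

Lemma eeval_un (S : semantics) (g : V -> V) v (A : eform S 1) :
  eeval (tf1 g) v (un A) = g (eeval (tf1 g) v A).
Proof. by []. Qed.

Lemma derK (S : semantics) k (f : ('I_k -> V) -> V) (R : trel) (G D : eform S k -> Prop) X Y :
  (forall v, img f v G = X) -> (forall v, img f v D = Y) ->
  ((X, Y) \in R) = pb (derives f R G D).
Proof.
move=> hG hD; apply/idP/pbP => [h v|h]; first by rewrite hG hD.
by move: (h (fun _ => One)); rewrite hG hD.
Qed.

Definition RS (R : trel) (G D : {set V}) := fun ws vs => (addS G ws, addS D vs) \in R.

Lemma conj_char (S : semantics) (HS : const_expressive S) R g :
  Gconj_fun S R g <-> forall a b, [forall G, [forall D, bC a b (g a b) (RS R G D)]].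
Proof.
split.
- move=> H a b; apply/forallP => G; apply/forallP => D.
  have [A hA] := const_ex HS (tf2 g) a; have [B hB] := const_ex HS (tf2 g) b.
  set Gc := @constset S 2 (tf2 g) G; set Dc := @constset S 2 (tf2 g) D.
  have [h1 h2] := H Gc Dc A B.
  have iG : forall v, img (tf2 g) v Gc = G by move=> v; exact: img_const.
  have iD : forall v, img (tf2 g) v Dc = D by move=> v; exact: img_const.
  have i1 : forall v, img (tf2 g) v (addf Gc (bin A B)) = G :|: [set g a b].
    by move=> v; rewrite img_addf iG eeval_bin hA hB.
  have i2 : forall v, img (tf2 g) v (addf (addf Gc A) B) = G :|: [set a] :|: [set b].
    by move=> v; rewrite !img_addf iG hA hB.
  have i3 : forall v, img (tf2 g) v (addf Dc (bin A B)) = D :|: [set g a b].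
    by move=> v; rewrite img_addf iD eeval_bin hA hB.
  have i4 : forall v, img (tf2 g) v (addf Dc A) = D :|: [set a].
    by move=> v; rewrite img_addf iD hA.
  have i5 : forall v, img (tf2 g) v (addf Dc B) = D :|: [set b].
    by move=> v; rewrite img_addf iD hB.
  rewrite /bC /RS /=.
  rewrite (derK R i1 iD) (derK R i2 iD) (derK R iG i3) (derK R iG i4) (derK R iG i5).
  by rewrite -pb_and (pb_iff h1) (pb_iff h2) !beq_refl.
- move=> H; rewrite /Gconj_fun /Gdisj_fun /Gcond_fun; hnf; move=> G D A B.
  have E : forall v, let a := eeval (tf2 g) v A in let b := eeval (tf2 g) v B in
      let X := img (tf2 g) v G in let Y := img (tf2 g) v D in
      ((X :|: [set g a b], Y) \in R) = ((X :|: [set a] :|: [set b], Y) \in R) /\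
      ((X, Y :|: [set g a b]) \in R) = (((X, Y :|: [set a]) \in R) && ((X, Y :|: [set b]) \in R)).
    move=> v /=; move/forallP: (H (eeval (tf2 g) v A) (eeval (tf2 g) v B)).
    move=> /(_ (img (tf2 g) v G)) /forallP /(_ (img (tf2 g) v D)).
    by rewrite /bC /RS /= => /andP [/beqP -> /beqP ->].
  split.
  + split => h v; have [e1 _] := E v; move: (h v); by rewrite !img_addf eeval_bin e1.
  + split => [h|[h1 h2] v].
    * by split => v; have [_ e2] := E v; move: (h v);
        rewrite !img_addf eeval_bin e2 => /andP [].
    * have [_ e2] := E v; rewrite img_addf eeval_bin e2; apply/andP; split;
        [move: (h1 v) | move: (h2 v)]; by rewrite img_addf.
Qed.

Lemma disj_char (S : semantics) (HS : const_expressive S) R g :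
  Gdisj_fun S R g <-> forall a b, [forall G, [forall D, bD a b (g a b) (RS R G D)]].
Proof.
split.
- move=> H a b; apply/forallP => G; apply/forallP => D.
  have [A hA] := const_ex HS (tf2 g) a; have [B hB] := const_ex HS (tf2 g) b.
  set Gc := @constset S 2 (tf2 g) G; set Dc := @constset S 2 (tf2 g) D.
  have [h1 h2] := H Gc Dc A B.
  have iG : forall v, img (tf2 g) v Gc = G by move=> v; exact: img_const.
  have iD : forall v, img (tf2 g) v Dc = D by move=> v; exact: img_const.
  have i1 : forall v, img (tf2 g) v (addf Dc (bin A B)) = D :|: [set g a b].
    by move=> v; rewrite img_addf iD eeval_bin hA hB.
  have i2 : forall v, img (tf2 g) v (addf (addf Dc A) B) = D :|: [set a] :|: [set b].
    by move=> v; rewrite !img_addf iD hA hB.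
  have i3 : forall v, img (tf2 g) v (addf Gc (bin A B)) = G :|: [set g a b].
    by move=> v; rewrite img_addf iG eeval_bin hA hB.
  have i4 : forall v, img (tf2 g) v (addf Gc A) = G :|: [set a].
    by move=> v; rewrite img_addf iG hA.
  have i5 : forall v, img (tf2 g) v (addf Gc B) = G :|: [set b].
    by move=> v; rewrite img_addf iG hB.
  rewrite /bD /RS /=.
  rewrite (derK R iG i1) (derK R iG i2) (derK R i3 iD) (derK R i4 iD) (derK R i5 iD).
  by rewrite -pb_and (pb_iff h1) (pb_iff h2) !beq_refl.
- move=> H; rewrite /Gconj_fun /Gdisj_fun /Gcond_fun; hnf; move=> G D A B.
  have E : forall v, let a := eeval (tf2 g) v A in let b := eeval (tf2 g) v B in
      let X := img (tf2 g) v G in let Y := img (tf2 g) v D in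
      ((X, Y :|: [set g a b]) \in R) = ((X, Y :|: [set a] :|: [set b]) \in R) /\
      ((X :|: [set g a b], Y) \in R) = (((X :|: [set a], Y) \in R) && ((X :|: [set b], Y) \in R)).
    move=> v /=; move/forallP: (H (eeval (tf2 g) v A) (eeval (tf2 g) v B)).
    move=> /(_ (img (tf2 g) v G)) /forallP /(_ (img (tf2 g) v D)).
    by rewrite /bD /RS /= => /andP [/beqP -> /beqP ->].
  split.
  + split => h v; have [e1 _] := E v; move: (h v); by rewrite !img_addf eeval_bin e1.
  + split => [h|[h1 h2] v].
    * by split => v; have [_ e2] := E v; move: (h v);
        rewrite !img_addf eeval_bin e2 => /andP [].
    * have [_ e2] := E v; rewrite img_addf eeval_bin e2; apply/andP; split;
        [move: (h1 v) | move: (h2 v)]; by rewrite img_addf.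
Qed.

Lemma cond_char (S : semantics) (HS : const_expressive S) R g :
  Gcond_fun S R g <-> forall a b, [forall G, [forall D, bCo a b (g a b) (RS R G D)]].
Proof.
split.
- move=> H a b; apply/forallP => G; apply/forallP => D.
  have [A hA] := const_ex HS (tf2 g) a; have [B hB] := const_ex HS (tf2 g) b.
  set Gc := @constset S 2 (tf2 g) G; set Dc := @constset S 2 (tf2 g) D.
  have [h1 h2] := H Gc Dc A B.
  have iG : forall v, img (tf2 g) v Gc = G by move=> v; exact: img_const.
  have iD : forall v, img (tf2 g) v Dc = D by move=> v; exact: img_const.
  have i1 : forall v, img (tf2 g) v (addf Dc (bin A B)) = D :|: [set g a b].
    by move=> v; rewrite img_addf iD eeval_bin hA hB.
  have i2 : forall v, img (tf2 g) v (addf Gc A) = G :|: [set a].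
    by move=> v; rewrite img_addf iG hA.
  have i2' : forall v, img (tf2 g) v (addf Dc B) = D :|: [set b].
    by move=> v; rewrite img_addf iD hB.
  have i3 : forall v, img (tf2 g) v (addf Gc (bin A B)) = G :|: [set g a b].
    by move=> v; rewrite img_addf iG eeval_bin hA hB.
  have i4 : forall v, img (tf2 g) v (addf Dc A) = D :|: [set a].
    by move=> v; rewrite img_addf iD hA.
  have i5 : forall v, img (tf2 g) v (addf Gc B) = G :|: [set b].
    by move=> v; rewrite img_addf iG hB.
  rewrite /bCo /RS /=.
  rewrite (derK R iG i1) (derK R i2 i2') (derK R i3 iD) (derK R iG i4) (derK R i5 iD).
  by rewrite -pb_and (pb_iff h1) (pb_iff h2) !beq_refl.
- move=> H; rewrite /Gconj_fun /Gdisj_fun /Gcond_fun; hnf; move=> G D A B.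
  have E : forall v, let a := eeval (tf2 g) v A in let b := eeval (tf2 g) v B in
      let X := img (tf2 g) v G in let Y := img (tf2 g) v D in
      ((X, Y :|: [set g a b]) \in R) = ((X :|: [set a], Y :|: [set b]) \in R) /\
      ((X :|: [set g a b], Y) \in R) = (((X, Y :|: [set a]) \in R) && ((X :|: [set b], Y) \in R)).
    move=> v /=; move/forallP: (H (eeval (tf2 g) v A) (eeval (tf2 g) v B)).
    move=> /(_ (img (tf2 g) v G)) /forallP /(_ (img (tf2 g) v D)).
    by rewrite /bCo /RS /= => /andP [/beqP -> /beqP ->].
  split.
  + split => h v; have [e1 _] := E v; move: (h v); by rewrite !img_addf eeval_bin e1.
  + split => [h|[h1 h2] v].
    * by split => v; have [_ e2] := E v; move: (h v);
        rewrite !img_addf eeval_bin e2 => /andP [].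
    * have [_ e2] := E v; rewrite img_addf eeval_bin e2; apply/andP; split;
        [move: (h1 v) | move: (h2 v)]; by rewrite img_addf.
Qed.

Lemma neg_char (S : semantics) (HS : const_expressive S) R g :
  Gneg_fun S R g <-> forall a, [forall G, [forall D, bN a (g a) (RS R G D)]].
Proof.
split.
- move=> H a; apply/forallP => G; apply/forallP => D.
  have [A hA] := const_ex HS (tf1 g) a.
  set Gc := @constset S 1 (tf1 g) G; set Dc := @constset S 1 (tf1 g) D.
  have [h1 h2] := H Gc Dc A.
  have iG : forall v, img (tf1 g) v Gc = G by move=> v; exact: img_const.
  have iD : forall v, img (tf1 g) v Dc = D by move=> v; exact: img_const.
  have i1 : forall v, img (tf1 g) v (addf Gc (un A)) = G :|: [set g a].
    by move=> v; rewrite img_addf iG eeval_un hA.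
  have i2 : forall v, img (tf1 g) v (addf Dc A) = D :|: [set a].
    by move=> v; rewrite img_addf iD hA.
  have i3 : forall v, img (tf1 g) v (addf Dc (un A)) = D :|: [set g a].
    by move=> v; rewrite img_addf iD eeval_un hA.
  have i4 : forall v, img (tf1 g) v (addf Gc A) = G :|: [set a].
    by move=> v; rewrite img_addf iG hA.
  rewrite /bN /RS /=.
  rewrite (derK R i1 iD) (derK R iG i2) (derK R iG i3) (derK R i4 iD).
  by rewrite (pb_iff h1) (pb_iff h2) !beq_refl.
- move=> H; rewrite /Gneg_fun; hnf; move=> G D A.
  have E : forall v, let a := eeval (tf1 g) v A in
      let X := img (tf1 g) v G in let Y := img (tf1 g) v D in
      ((X :|: [set g a], Y) \in R) = ((X, Y :|: [set a]) \in R) /\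
      ((X, Y :|: [set g a]) \in R) = ((X :|: [set a], Y) \in R).
    move=> v /=; move/forallP: (H (eeval (tf1 g) v A)).
    move=> /(_ (img (tf1 g) v G)) /forallP /(_ (img (tf1 g) v D)).
    by rewrite /bN /RS /= => /andP [/beqP -> /beqP ->].
  split; split => h v.
  + by have [e1 _] := E v; move: (h v); rewrite !img_addf eeval_un e1.
  + by have [e1 _] := E v; move: (h v); rewrite !img_addf eeval_un e1.
  + by have [_ e2] := E v; move: (h v); rewrite !img_addf eeval_un e2.
  + by have [_ e2] := E v; move: (h v); rewrite !img_addf eeval_un e2.
Qed.

Lemma adm2 (Pg : (V -> V -> V) -> Prop) (Q : V -> V -> V -> bool) :
  (forall g, Pg g <-> forall a b, Q a b (g a b)) -> ((exists g, Pg g) <-> f2 Q).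
Proof.
move=> H; split => [[g /H Hg]|Hf].
  apply/allP => a _; apply/allP => b _; apply/hasP; exists (g a b) => //; exact: mem_allV.
exists (fun a b => odflt One [pick z | Q a b z]); apply/H => a b.
case: pickP => [z //|hn].
move/allP: Hf => /(_ a (mem_allV a)) /allP /(_ b (mem_allV b)) /hasP [z _ hz].
by rewrite hn in hz.
Qed.

Lemma adm1 (Pg : (V -> V) -> Prop) (Q : V -> V -> bool) :
  (forall g, Pg g <-> forall a, Q a (g a)) -> ((exists g, Pg g) <-> f1 Q).
Proof.
move=> H; split => [[g /H Hg]|Hf].
  apply/allP => a _; apply/hasP; exists (g a) => //; exact: mem_allV.
exists (fun a => odflt One [pick z | Q a z]); apply/H => a.
case: pickP => [z //|hn].
move/allP: Hf => /(_ a (mem_allV a)) /hasP [z _ hz].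
by rewrite hn in hz.
Qed.

Lemma PE (B : (seq V -> seq V -> bool) -> bool) P :
  [forall G, [forall D, B (RS (relM P) G D)]] = forQ (fun g d => B (Rf (memf P) g d)).
Proof.
rewrite forall_set4 /forQ; apply: eq_all => g; rewrite forall_set4; apply: eq_all => d.
congr B; apply: functional_extensionality => ws; apply: functional_extensionality => vs.
by rewrite /RS /Rf -!dec_addl memrelE.
Qed.

Lemma f2PE (B : V -> V -> V -> (seq V -> seq V -> bool) -> bool) P :
  f2 (fun a b z => [forall G, [forall D, B a b z (RS (relM P) G D)]]) = P2 forQ B (memf P).
Proof.
rewrite /P2; congr f2; do 3 apply: functional_extensionality => ?; exact: PE.
Qed.

Lemma f1PE (B : V -> V -> (seq V -> seq V -> bool) -> bool) P :
  f1 (fun a z => [forall G, [forall D, B a z (RS (relM P) G D)]]) = P1 forQ B (memf P).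
Proof.
rewrite /P1; congr f1; do 2 apply: functional_extensionality => ?; exact: PE.
Qed.

Lemma admC (S : semantics) (HS : const_expressive S) P :
  admits_conj S (relM P) <-> (fsig P).1.1.1.
Proof.
rewrite fsigE /= -f2PE.
exact: (adm2 (Q := fun a b z => [forall G, [forall D, bC a b z (RS (relM P) G D)]])
  (conj_char HS (relM P))).
Qed.

Lemma admD (S : semantics) (HS : const_expressive S) P :
  admits_disj S (relM P) <-> (fsig P).1.1.2.
Proof.
rewrite fsigE /= -f2PE.
exact: (adm2 (Q := fun a b z => [forall G, [forall D, bD a b z (RS (relM P) G D)]])
  (disj_char HS (relM P))).
Qed.

Lemma admCo (S : semantics) (HS : const_expressive S) P :
  admits_cond S (relM P) <-> (fsig P).2.
Proof.
rewrite fsigE /= -f2PE.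
exact: (adm2 (Q := fun a b z => [forall G, [forall D, bCo a b z (RS (relM P) G D)]])
  (cond_char HS (relM P))).
Qed.

Lemma admN (S : semantics) (HS : const_expressive S) P :
  admits_neg S (relM P) <-> (fsig P).1.2.
Proof.
rewrite fsigE /= -f1PE.
exact: (adm1 (Q := fun a z => [forall G, [forall D, bN a z (RS (relM P) G D)]])
  (neg_char HS (relM P))).
Qed.

Lemma pbE (P : Prop) (b : bool) : (P <-> b) -> pb P = b.
Proof. by move=> h; apply/pbP/idP => /h. Qed.

Definition ka : K := ((true, false), (true, false)).
Definition kb : K := ((false, true), (false, true)).
Definition kc : K := ((true, false), (false, true)).
Definition kd : K := ((false, true), (true, false)).

Lemma EA : [set One; H1] = dec (true, true, false, false).
Proof. by apply/setP; case; rewrite !inE !eqVE. Qed.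
Lemma EB : [set One; H2] = dec (true, false, true, false).
Proof. by apply/setP; case; rewrite !inE !eqVE. Qed.

Lemma R11E : R11_22 = relM (dclist [:: ka; kb]).
Proof. by apply/setP => x; rewrite memrel_dcl /= andbT /R11_22 in_setI EA EB. Qed.
Lemma R12E : R12_21 = relM (dclist [:: kc; kd]).
Proof. by apply/setP => x; rewrite memrel_dcl /= andbT /R12_21 in_setI EA EB. Qed.

Definition veq (x y : V) := match x, y with
  | One, One | H1, H1 | H2, H2 | Zero, Zero => true | _, _ => false end.

Lemma veqP' (x y : V) : reflect (x = y) (veq x y).
Proof. by case: x; case: y; constructor. Qed.

Definition condfact (P : seq K) (c : V -> V -> V) :=
  all (fun a => all (fun b => all (fun z =>
    forQ (fun g d => bCo a b z (Rf (memf P) g d)) == veq z (c a b)) allV) allV) allV.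

Lemma FA : condfact (dclist [:: ka; kb]) cond_a. Proof. by vm_compute. Qed.
Lemma FB : condfact (dclist [:: kc; kd]) cond_b. Proof. by vm_compute. Qed.

Lemma cond_unique (S : semantics) (HS : const_expressive S) P c g :
  condfact P c -> (Gcond_fun S (relM P) g <-> g = c).
Proof.
move=> F; split => [/(cond_char HS) H|->].
  apply: functional_extensionality => a; apply: functional_extensionality => b.
  have := H a b; rewrite PE.
  move/allP: F => /(_ a (mem_allV a)) /allP /(_ b (mem_allV b)) /allP.
  by move=> /(_ (g a b) (mem_allV _)) /eqP -> /veqP'.
apply/(cond_char HS) => a b; rewrite PE.
move/allP: F => /(_ a (mem_allV a)) /allP /(_ b (mem_allV b)) /allP.
by move=> /(_ (c a b) (mem_allV _)) /eqP ->; apply/veqP'.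
Qed.

Definition T18 : seq (seq K) :=
  map (fun k => dclist [:: k]) allK ++ [:: dclist [:: ka; kb]; dclist [:: kc; kd]].

Definition h9 (P : seq K) (s : bool * bool * bool * bool) := s.2 == (P \in T18).
Lemma F9 : all (fun P => h9 P (fsig P)) L. Proof. by rewrite allS; vm_compute. Qed.
Lemma F9b : all (fun P => P \in L) T18. Proof. by rewrite LE; vm_compute. Qed.

Definition h4 (P : seq K) (s : bool * bool * bool * bool) :=
  s.2 ==> [&& s.1.2, s.1.1.2 & s.1.1.1].
Lemma F4 : all (fun P => h4 P (fsig P)) L. Proof. by rewrite allS; vm_compute. Qed.
Definition h8 (P : seq K) (s : bool * bool * bool * bool) :=
  s.1.1.1 ==> s.1.1.2 ==> ~~ s.1.2 ==> ~~ s.2.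
Lemma F8 : all (fun P => h8 P (fsig P)) L. Proof. by rewrite allS; vm_compute. Qed.
Definition h11 (P : seq K) (s : bool * bool * bool * bool) :=
  (s.1.1.1 && ~~ s.1.1.2 || s.1.1.2 && ~~ s.1.1.1) ==> ~~ s.1.2 && ~~ s.2.
Lemma F11 : all (fun P => h11 P (fsig P)) L. Proof. by rewrite allS; vm_compute. Qed.
Definition h13 (P : seq K) (s : bool * bool * bool * bool) :=
  ~~ s.1.1.1 ==> ~~ s.1.1.2 ==> ~~ s.1.2 && ~~ s.2.
Lemma F13 : all (fun P => h13 P (fsig P)) L. Proof. by rewrite allS; vm_compute. Qed.

Definition c18 (s : bool * bool * bool * bool) := s.2.
Definition c28 (s : bool * bool * bool * bool) := [&& s.1.1.1, s.1.1.2 & ~~ s.1.2].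
Definition c27a (s : bool * bool * bool * bool) := s.1.1.1 && ~~ s.1.1.2.
Definition c27b (s : bool * bool * bool * bool) := s.1.1.2 && ~~ s.1.1.1.
Definition c67 (s : bool * bool * bool * bool) := ~~ s.1.1.1 && ~~ s.1.1.2.

Lemma C18 : count (fun P => c18 (fsig P)) L = 18. Proof. by rewrite countS; vm_compute. Qed.
Lemma C28 : count (fun P => c28 (fsig P)) L = 28. Proof. by rewrite countS; vm_compute. Qed.
Lemma C27a : count (fun P => c27a (fsig P)) L = 27. Proof. by rewrite countS; vm_compute. Qed.
Lemma C27b : count (fun P => c27b (fsig P)) L = 27. Proof. by rewrite countS; vm_compute. Qed.
Lemma C67 : count (fun P => c67 (fsig P)) L = 67. Proof. by rewrite countS; vm_compute. Qed.

Lemma inL R : R \in intersective -> exists2 P, P \in L & R = relM P.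
Proof. by rewrite inter_eq inE => /mapP. Qed.

Theorem theorem5p1 (S : semantics) (HS : const_expressive S) :
  #|intersective| = 167
  (* (i) *)
  /\ [set R in intersective | pb (admits_cond S R)]
       = mixed_rels :|: [set R11_22; R12_21]
  /\ #|[set R in intersective | pb (admits_cond S R)]| = 18
  /\ (forall R, R \in intersective -> admits_cond S R ->
        admits_neg S R /\ admits_disj S R /\ admits_conj S R)
  /\ (forall g : V -> V -> V, Gcond_fun S R11_22 g <-> g = cond_a)
  /\ (forall g : V -> V -> V, Gcond_fun S R12_21 g <-> g = cond_b)
  (* (ii) *)
  /\ #|[set R in intersective | [&& pb (admits_conj S R), pb (admits_disj S R)
                                  & ~~ pb (admits_neg S R)]]| = 28
  /\ (forall R, R \in intersective -> admits_conj S R -> admits_disj S R ->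
        ~ admits_neg S R -> ~ admits_cond S R)
  (* (iii) *)
  /\ #|[set R in intersective | pb (admits_conj S R) && ~~ pb (admits_disj S R)]| = 27
  /\ #|[set R in intersective | pb (admits_disj S R) && ~~ pb (admits_conj S R)]| = 27
  /\ (forall R, R \in intersective ->
        (admits_conj S R /\ ~ admits_disj S R \/ admits_disj S R /\ ~ admits_conj S R) ->
        ~ admits_neg S R /\ ~ admits_cond S R)
  (* (iv) *)
  /\ #|[set R in intersective | ~~ pb (admits_conj S R) && ~~ pb (admits_disj S R)]| = 67
  /\ (forall R, R \in intersective -> ~ admits_conj S R -> ~ admits_disj S R ->
        ~ admits_neg S R /\ ~ admits_cond S R).
Proof.
have pC P : pb (admits_conj S (relM P)) = (fsig P).1.1.1 by apply: pbE; exact: admC.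
have pD P : pb (admits_disj S (relM P)) = (fsig P).1.1.2 by apply: pbE; exact: admD.
have pN P : pb (admits_neg S (relM P)) = (fsig P).1.2 by apply: pbE; exact: admN.
have pCo P : pb (admits_cond S (relM P)) = (fsig P).2 by apply: pbE; exact: admCo.
have nC P : ~ admits_conj S (relM P) -> (fsig P).1.1.1 = false.
  by move=> h; apply/negbTE/negP => /(admC HS).
have nD P : ~ admits_disj S (relM P) -> (fsig P).1.1.2 = false.
  by move=> h; apply/negbTE/negP => /(admD HS).
have nN P : ~ admits_neg S (relM P) -> (fsig P).1.2 = false.
  by move=> h; apply/negbTE/negP => /(admN HS).
split; first exact: card_inter.
split.
  rewrite (@setfilt _ (fun P => (fsig P).2)); last by move=> P _; rewrite pCo.
  apply/setP => R; rewrite inE !in_setU !in_set1; apply/idP/idP.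
    move/mapP => [P]; rewrite mem_filter => /andP [hP PL] ->.
    have : P \in T18 by move/allP: F9 => /(_ P PL); rewrite /h9 hP => /eqP <-.
    rewrite mem_cat => /orP [/mapP [k _ ->]|].
      apply/orP; left; apply/imsetP; exists (e k); first exact: eX.
      by rewrite relM_dcl1.
    by rewrite !inE => /orP [] /eqP ->; rewrite ?R11E ?R12E eqxx ?orbT.
  have memT P : P \in T18 -> relM P \in [seq relM i | i <- filter (fun P => (fsig P).2) L].
    move=> PT; have PL : P \in L by move/allP: F9b => /(_ P PT).
    apply/mapP; exists P => //; rewrite mem_filter PL andbT.
    by move/allP: F9 => /(_ P PL); rewrite /h9 PT => /eqP.
  case/orP => [/imsetP [p pX ->]|/orP [] /eqP ->].
  - have [k ->] := Xe pX; rewrite -relM_dcl1; apply: memT.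
    by rewrite mem_cat; apply/orP; left; apply/mapP; exists k => //; exact: mem_allK.
  - by rewrite R11E; apply: memT; rewrite mem_cat !inE eqxx ?orbT.
  - by rewrite R12E; apply: memT; rewrite mem_cat !inE eqxx ?orbT.
split.
  rewrite (@card_filt _ (fun P => c18 (fsig P))); first exact: C18.
  by move=> P _; rewrite pCo.
split.
  move=> R /inL [P PL ->] /(admCo HS) hco.
  move/allP: F4 => /(_ P PL); rewrite /h4 hco /= => /and3P [h1 h2 h3].
  by split; [apply/(admN HS) | split; [apply/(admD HS) | apply/(admC HS)]].
split.
  by move=> g; rewrite R11E; apply: (cond_unique HS); exact: FA.
split.
  by move=> g; rewrite R12E; apply: (cond_unique HS); exact: FB.
split.
  rewrite (@card_filt _ (fun P => c28 (fsig P))); first exact: C28.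
  by move=> P _; rewrite pC pD pN.
split.
  move=> R /inL [P PL ->] /(admC HS) hc /(admD HS) hd /nN hn /(admCo HS) hco.
  by move/allP: F8 => /(_ P PL); rewrite /h8 hc hd hn hco.
split.
  rewrite (@card_filt _ (fun P => c27a (fsig P))); first exact: C27a.
  by move=> P _; rewrite pC pD.
split.
  rewrite (@card_filt _ (fun P => c27b (fsig P))); first exact: C27b.
  by move=> P _; rewrite pC pD.
split.
  move=> R /inL [P PL ->] H.
  have H' : ((fsig P).1.1.1 && ~~ (fsig P).1.1.2 || (fsig P).1.1.2 && ~~ (fsig P).1.1.1).
    by case: H => [[/(admC HS) -> /nD ->]|[/(admD HS) -> /nC ->]]; rewrite ?orbT.
  move/allP: F11 => /(_ P PL); rewrite /h11 H' /= => /andP [h1 h2].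
  by split; [move/(admN HS); apply/negP | move/(admCo HS); apply/negP].
split.
  rewrite (@card_filt _ (fun P => c67 (fsig P))); first exact: C67.
  by move=> P _; rewrite pC pD.
move=> R /inL [P PL ->] /nC hc /nD hd.
move/allP: F13 => /(_ P PL); rewrite /h13 hc hd /= => /andP [h1 h2].
by split; [move/(admN HS); apply/negP | move/(admCo HS); apply/negP].
Qed.
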